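(* Consider the PSFJ dynamics with period $p$ described in the context, and suppose the temporal graph $\mathcal G_0^{p}$ is a weakly defected temporal graph. Then the system is exponentially stable with growth factor and decay rate \[ c=\frac{1}{\|\Phi(p,0)\|^{p}},\qquad \gamma=\sqrt[p]{\|\Phi(p,0)\|}, \] i.e., $\|\Phi(t,\tau)\|\le c\gamma^{t-\tau}$ for all $t\ge\tau\ge0$. Moreover, for every initial condition the $\omega$-limit set contains at most $p$ points, independent of the initial condition, namely among \[ \mathbf x_l^*=(I-M_l)^{-1}N_l\,\mathbf s,\qquad l=1,\dots,p . \]
   Context: There are $n$ agents $\mathcal V=\{\mathrm v_1,\dots,\mathrm v_n\}$ with opinions $\mathbf x[t]$ and innate opinions $\mathbf s\in[0,1]^n$. Trust-based model: given adjacency $A[t]\in\{0,1\}^{n\times n}$ with neighbor sets $\mathcal N_i[t]=\{\mathrm v_j:a_{ij}[t]=1\}$ and a fixed row-stochastic trust matrix $\hat W$, $w_{ij}[t]=a_{ij}[t]\hat w_{ij}/\sum_{k\in\mathcal N_i[t]}a_{ik}[t]\hat w_{ik}$ and $\lambda_i[t]=f_i(\mathcal N_i[t])$ with fixed $f_i:2^{\mathcal V}\to[0,1]$, $f_i(\emptyset)=0$. Standing assumptions: $\lambda_i[t]=0$ iff $w_{ij}[t]=0$ for all $j$; no $\Lambda[t]$ is identically zero. PSFJ: adjacency matrices $A_1,\dots,A_p$ with $A[t]=A_{\langle t\rangle_p}$, $\langle t\rangle_p=(t\bmod p)+1$, each $A_l$ determining $(W_l,\Lambda_l)$; dynamics $\mathbf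 x[t+1]=\Lambda_{\langle t\rangle_p}W_{\langle t\rangle_p}\mathbf x[t]+(I-\Lambda_{\langle t\rangle_p})\mathbf s$. State transition matrix $\Phi(t,\tau)=\Lambda[t-1]W[t-1]\cdots\Lambda[\tau]W[\tau]$ ($\Phi(\tau,\tau)=I$) with $\Lambda[t]=\Lambda_{\langle t\rangle_p}$, $W[t]=W_{\langle t\rangle_p}$; norm $\|A\|:=\max_i\sum_j|a_{ij}|$. For $l\in\{1,\dots,p\}$ let $m_j=((l-1+j)\bmod p)+1$, $M_l=\Lambda_{m_{p-1}}W_{m_{p-1}}\cdots\Lambda_{m_0}W_{m_0}$ and $N_l=\sum_{j=0}^{p-1}(\Lambda_{m_{p-1}}W_{m_{p-1}}\cdots\Lambda_{m_{j+1}}W_{m_{j+1}})(I-\Lambda_{m_j})$ (empty product $=I$). The $\omega$-limit set of a trajectory is the set of its accumulation points. Graphs: $\mathcal G[t]$ has directed edge $(\mathrm v_j,\mathrm v_i)$ iff $w_{ij}[t]>0$; $\mathcal G_0^p=\{\mathcal G[k]\}_{k=0}^p$. A temporal path is a sequence of edges $(\mathrm v_j,\mathrm v_{i_1},t_{k_0}),\dots,(\mathrm v_{i_m},\mathrm v_i,t_{k_m})$ at successive time steps. Agent $\mathrm v_i$ is stubborn at time $t$ if $\lambda_i[t]<1$; an $s$-path starts at a stubborn agent. $\mathcal G_0^p$ is a weakly defected temporal graph (WDTG) if there is $k\in[0,p)$ such that in layer $\mathcal G[k]$ every agent is either stubborn or connected to a stubborn agent via a finite $s$-path entirely contained in $[0,p)$.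 *)

(* Defs.v *)
From HB Require Import structures.
From mathcomp Require Import all_boot all_order all_algebra.
From mathcomp Require Import all_classical all_reals exp.
Set Implicit Arguments. Unset Strict Implicit. Unset Printing Implicit Defensive.
Import Order.TTheory GRing.Theory Num.Theory.
Local Open Scope ring_scope.

Definition mxnorm (R : realType) (m k : nat) (M : 'M[R]_(m, k)) : R :=
  \big[Num.max/0]_(i < m) \sum_(j < k) `|M i j|.

Definition nbrs (n : nat) (A : 'I_n -> 'I_n -> bool) (i : 'I_n) : {set 'I_n} :=
  [set j | A i j].

(* w_ij = a_ij hat w_ij / sum_{k in N_i} a_ik hat w_ik (0 if the sum is 0). *)
Definition Wmat (R : realType) (n : nat) (What : 'M[R]_n)
  (A : 'I_n -> 'I_n -> bool) : 'M[R]_n :=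
  \matrix_(i, j) ((if A i j then What i j else 0) /
                  (\sum_(k < n | A i k) What i k)).

Definition Lam (R : realType) (n : nat) (f : 'I_n -> {set 'I_n} -> R)
  (A : 'I_n -> 'I_n -> bool) : 'M[R]_n :=
  diag_mx (\row_i f i (nbrs A i)).

(* The PSFJ system.  Adjacency matrices are given 0-indexed: Aseq l, l < p,
   is the paper's A_{l+1}; at time t the active one is Aseq (t %% p)%N,
   i.e. the paper's A_{<t>_p}. *)
Definition Lt (R : realType) (n p : nat) (What : 'M[R]_n)
  (f : 'I_n -> {set 'I_n} -> R) (Aseq : nat -> 'I_n -> 'I_n -> bool) (t : nat)
  : 'M[R]_n := Lam f (Aseq (t %% p)%N).

Definition Wt (R : realType) (n p : nat) (What : 'M[R]_n)
  (Aseq : nat -> 'I_n -> 'I_n -> bool) (t : nat) : 'M[R]_n :=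
  Wmat What (Aseq (t %% p)%N).

Fixpoint PhiN (R : realType) (n p : nat) (What : 'M[R]_n)
  (f : 'I_n -> {set 'I_n} -> R) (Aseq : nat -> 'I_n -> 'I_n -> bool)
  (d tau : nat) : 'M[R]_n :=
  match d with
  | 0 => 1%:M
  | d'.+1 => (Lt p What f Aseq (tau + d')%N *m Wt p What Aseq (tau + d')%N)
             *m PhiN p What f Aseq d' tau
  end.

Definition Phi (R : realType) (n p : nat) (What : 'M[R]_n)
  (f : 'I_n -> {set 'I_n} -> R) (Aseq : nat -> 'I_n -> 'I_n -> bool)
  (t tau : nat) : 'M[R]_n := PhiN p What f Aseq (t - tau) tau.

(* M_l and N_l (0-indexed: Mcyc l is the paper's M_{l+1}, m_j = (l+j) mod p). *)
Definition Mcyc (R : realType) (n p : nat) (What : 'M[R]_n)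
  (f : 'I_n -> {set 'I_n} -> R) (Aseq : nat -> 'I_n -> 'I_n -> bool)
  (l : nat) : 'M[R]_n := PhiN p What f Aseq p l.

Definition Ncyc (R : realType) (n p : nat) (What : 'M[R]_n)
  (f : 'I_n -> {set 'I_n} -> R) (Aseq : nat -> 'I_n -> 'I_n -> bool)
  (l : nat) : 'M[R]_n :=
  \sum_(j < p) (PhiN p What f Aseq (p - 1 - j)%N (l + j + 1)%N
                 *m (1%:M - Lt p What f Aseq (l + j)%N)).

Fixpoint traj (R : realType) (n p : nat) (What : 'M[R]_n)
  (f : 'I_n -> {set 'I_n} -> R) (Aseq : nat -> 'I_n -> 'I_n -> bool)
  (s x0 : 'cV[R]_n) (t : nat) : 'cV[R]_n :=
  match t with
  | 0 => x0
  | t'.+1 => (Lt p What f Aseq t' *m Wt p What Aseq t') *m traj p What f Aseq s x0 t'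
             + (1%:M - Lt p What f Aseq t') *m s
  end.

Definition omega_limit_pt (R : realType) (n : nat) (x : nat -> 'cV[R]_n)
  (y : 'cV[R]_n) : Prop :=
  forall eps : R, 0 < eps -> forall N : nat, exists t : nat,
    (N <= t)%N /\ mxnorm (x t - y) < eps.

Definition stubborn (R : realType) (n p : nat) (What : 'M[R]_n)
  (f : 'I_n -> {set 'I_n} -> R) (Aseq : nat -> 'I_n -> 'I_n -> bool)
  (i : 'I_n) (t : nat) : Prop :=
  Lt p What f Aseq t i i < 1.

Definition tedge (R : realType) (n p : nat) (What : 'M[R]_n)
  (Aseq : nat -> 'I_n -> 'I_n -> bool) (j i : 'I_n) (t : nat) : Prop :=
  0 < Wt p What Aseq t i j.

(* Finite s-path contained in [0,p) ending at agent i with its last edge at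
   time k: a source v 0 stubborn at time t0 >= 0, followed by edges
   (v r, v (r+1), t0 + r + 1), r < m, at successive time steps, the last one
   at time t0 + m = k. *)
Definition s_path_to (R : realType) (n p : nat) (What : 'M[R]_n)
  (f : 'I_n -> {set 'I_n} -> R) (Aseq : nat -> 'I_n -> 'I_n -> bool)
  (i : 'I_n) (k : nat) : Prop :=
  exists (m t0 : nat) (v : nat -> 'I_n),
    [/\ (0 < m)%N, (t0 + m)%N = k, (k < p)%N, v m = i &
        stubborn p What f Aseq (v 0%N) t0] /\
        (forall r : nat, (r < m)%N -> tedge p What Aseq (v r) (v r.+1) (t0 + r.+1)%N).

Definition WDTG (R : realType) (n p : nat) (What : 'M[R]_n)
  (f : 'I_n -> {set 'I_n} -> R) (Aseq : nat -> 'I_n -> 'I_n -> bool) : Prop :=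
  exists k : nat, (k < p)%N /\
    forall i : 'I_n, stubborn p What f Aseq i k \/ s_path_to p What f Aseq i k.

(* Main.v *)
Require Import Defs.
From HB Require Import structures.
From mathcomp Require Import all_boot all_order all_algebra.
From mathcomp Require Import all_classical all_reals exp.
From mathcomp Require Import zify.
Import Order.TTheory GRing.Theory Num.Theory.
Local Open Scope ring_scope.
Set Implicit Arguments. Unset Strict Implicit. Unset Printing Implicit Defensive.

Section Norm.
Variable R : realType.

Lemma mxnorm_ge0 m k (M : 'M[R]_(m,k)) : 0 <= mxnorm M.
Proof.
rewrite /mxnorm; elim/big_ind: _ => //= [x y hx hy|i _].
  by rewrite le_max hx.
by apply: sumr_ge0 => j _.
Qed.

Lemma mxnorm_row m k (M : 'M[R]_(m,k)) i : \sum_j `|M i j| <= mxnorm M.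
Proof.
rewrite /mxnorm (bigD1 i) //= le_max lexx //.
Qed.

Lemma mxnorm_le m k (M : 'M[R]_(m,k)) b : 0 <= b ->
  (forall i, \sum_j `|M i j| <= b) -> mxnorm M <= b.
Proof.
move=> b0 H; rewrite /mxnorm; elim/big_ind: _ => //=; try by move=> x y hx hy; rewrite ge_max hx hy.
all: try by move=> i _; exact: H.
Qed.

Lemma mxnorm_lt m k (M : 'M[R]_(m,k)) b : 0 < b ->
  (forall i, \sum_j `|M i j| < b) -> mxnorm M < b.
Proof.
move=> b0 H; rewrite /mxnorm; elim/big_ind: _ => //=; try by move=> x y hx hy; rewrite gt_max hx hy.
all: try by move=> i _; exact: H.
Qed.

Lemma mxnorm_mul m k l (A : 'M[R]_(m,k)) (B : 'M[R]_(k,l)) :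
  mxnorm (A *m B) <= mxnorm A * mxnorm B.
Proof.
apply: mxnorm_le; first by rewrite mulr_ge0 ?mxnorm_ge0.
move=> i.
apply: (@le_trans _ _ (\sum_j \sum_(q < k) `|A i q| * `|B q j|)).
  apply: ler_sum => j _; rewrite mxE.
  by apply: (le_trans (ler_norm_sum _ _ _)); apply: ler_sum => q _; rewrite normrM.
rewrite exchange_big /=.
apply: (@le_trans _ _ (\sum_(q < k) `|A i q| * mxnorm B)).
  apply: ler_sum => q _; rewrite -mulr_sumr ler_wpM2l //.
  exact: mxnorm_row.
by rewrite -mulr_suml ler_wpM2r ?mxnorm_ge0 ?mxnorm_row.
Qed.

Lemma mxnorm_add m k (A B : 'M[R]_(m,k)) :
  mxnorm (A + B) <= mxnorm A + mxnorm B.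
Proof.
apply: mxnorm_le; first by rewrite addr_ge0 ?mxnorm_ge0.
move=> i; apply: (@le_trans _ _ (\sum_j (`|A i j| + `|B i j|))).
  by apply: ler_sum => j _; rewrite mxE ler_normD.
by rewrite big_split /= lerD ?mxnorm_row.
Qed.

Lemma mxnorm_opp m k (A : 'M[R]_(m,k)) : mxnorm (- A) = mxnorm A.
Proof.
rewrite /mxnorm; apply: eq_bigr => i _; apply: eq_bigr => j _.
by rewrite mxE normrN.
Qed.

Lemma mxnorm_eq0 m k (A : 'M[R]_(m,k)) : mxnorm A = 0 -> A = 0.
Proof.
move=> H; apply/matrixP => i j; rewrite mxE.
apply/eqP; rewrite -normr_eq0 eq_le normr_ge0 andbT.
rewrite -H; apply: le_trans (mxnorm_row A i).
by rewrite (bigD1 j) //= lerDl sumr_ge0.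
Qed.

Lemma mxnorm1 m : mxnorm (1%:M : 'M[R]_m) <= 1.
Proof.
apply: mxnorm_le => // i.
rewrite (bigD1 i) //= big1 ?addr0.
  by rewrite mxE eqxx normr1.
by move=> j /negbTE; rewrite mxE eq_sym => ->; rewrite normr0.
Qed.

End Norm.
Section Sys.
Variables (R : realType) (n p : nat) (What : 'M[R]_n)
  (f : 'I_n -> {set 'I_n} -> R) (Aseq : nat -> 'I_n -> 'I_n -> bool).
Hypothesis p0 : (0 < p)%N.
Hypothesis What0 : forall i j, 0 <= What i j.
Hypothesis f01 : forall i S, 0 <= f i S <= 1.

Local Notation L := (Lt p What f Aseq).
Local Notation W := (Wt p What Aseq).
Local Notation PN := (PhiN p What f Aseq).

Lemma Wt_ge0 t i j : 0 <= W t i j.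
Proof.
rewrite /Wt /Wmat mxE; apply: divr_ge0; first by case: ifP.
by apply: sumr_ge0 => k _.
Qed.

Lemma Wt_rowsum t i : \sum_j W t i j <= 1.
Proof.
rewrite /Wt /Wmat.
under eq_bigr => j _ do rewrite mxE.
rewrite -mulr_suml -big_mkcond /=.
set S := \sum_(j < n | _) _.
have [->|S0] := eqVneq S 0; first by rewrite mul0r.
by rewrite mulfV.
Qed.

Lemma Lt_diag t i : L t i i = f i (nbrs (Aseq (t %% p)%N) i).
Proof. by rewrite /Lt /Lam mxE eqxx mulr1n mxE. Qed.

Lemma Q_entry t i j : (L t *m W t) i j = f i (nbrs (Aseq (t %% p)%N) i) * W t i j.
Proof. by rewrite /Lt /Lam mul_diag_mx !mxE. Qed.

Lemma Q_ge0 t i j : 0 <= (L t *m W t) i j.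
Proof. by rewrite Q_entry mulr_ge0 ?Wt_ge0 //; case/andP: (f01 i (nbrs (Aseq (t %% p)%N) i)). Qed.

Lemma rowsum_mul m (A : 'M[R]_(n, n)) (B : 'M[R]_(n, m)) i :
  \sum_j (A *m B) i j = \sum_k A i k * \sum_j B k j.
Proof.
under eq_bigr => j _ do rewrite mxE.
rewrite exchange_big /=; apply: eq_bigr => k _; by rewrite mulr_sumr.
Qed.

Lemma f_i01 t i : 0 <= f i (nbrs (Aseq (t %% p)%N) i) <= 1.
Proof. exact: f01. Qed.

Lemma Wsum_ge0 t i : 0 <= \sum_k W t i k.
Proof. by apply: sumr_ge0 => k _; exact: Wt_ge0. Qed.

Lemma Q_rowsum_eq t i (r : 'I_n -> R) :
  \sum_k (L t *m W t) i k * r k = f i (nbrs (Aseq (t %% p)%N) i) * \sum_k W t i k * r k.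
Proof. rewrite mulr_sumr; apply: eq_bigr => k _; by rewrite Q_entry mulrA. Qed.

Lemma WR_le t i (r : 'I_n -> R) : (forall k, r k <= 1) -> \sum_k W t i k * r k <= 1.
Proof.
move=> hr; apply: (le_trans _ (Wt_rowsum t i)); apply: ler_sum => k _.
by rewrite -[X in _ <= X]mulr1 ler_wpM2l ?Wt_ge0.
Qed.

Lemma WR_ge0 t i (r : 'I_n -> R) : (forall k, 0 <= r k) -> 0 <= \sum_k W t i k * r k.
Proof. by move=> hr; apply: sumr_ge0 => k _; rewrite mulr_ge0 ?Wt_ge0. Qed.

Lemma WR_lt t i j (r : 'I_n -> R) : (forall k, r k <= 1) -> 0 < W t i j -> r j < 1 ->
  \sum_k W t i k * r k < 1.
Proof.
move=> hr hw hj.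
apply: (@lt_le_trans _ _ (\sum_k W t i k)); last exact: Wt_rowsum.
rewrite -subr_gt0 -sumrB.
rewrite (bigD1 j) //=; apply: ltr_pwDl.
  by rewrite -{1}[W t i j]mulr1 -mulrBr mulr_gt0 // subr_gt0.
apply: sumr_ge0 => k _; rewrite -{1}[W t i k]mulr1 -mulrBr mulr_ge0 ?Wt_ge0 //.
by rewrite subr_ge0.
Qed.

Lemma Q_rowsum_le t i (r : 'I_n -> R) : (forall k, 0 <= r k) -> (forall k, r k <= 1) ->
  \sum_k (L t *m W t) i k * r k <= 1.
Proof.
move=> h0 h1; rewrite Q_rowsum_eq; case/andP: (f_i01 t i) => a b.
by rewrite mulr_ile1 ?WR_le ?WR_ge0.
Qed.

Lemma Q_rowsum_lt_stub t i (r : 'I_n -> R) : (forall k, 0 <= r k) -> (forall k, r k <= 1) ->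
  L t i i < 1 -> \sum_k (L t *m W t) i k * r k < 1.
Proof.
move=> h0 h1; rewrite Lt_diag Q_rowsum_eq => hl; case/andP: (f_i01 t i) => a b.
apply: le_lt_trans hl; rewrite -[X in _ <= X]mulr1 ler_wpM2l //.
exact: WR_le.
Qed.

Lemma Q_rowsum_lt_edge t i j (r : 'I_n -> R) : (forall k, 0 <= r k) -> (forall k, r k <= 1) ->
  0 < W t i j -> r j < 1 -> \sum_k (L t *m W t) i k * r k < 1.
Proof.
move=> h0 h1 hw hj; rewrite Q_rowsum_eq; case/andP: (f_i01 t i) => a b.
apply: le_lt_trans (WR_lt h1 hw hj).
by rewrite -[X in _ <= X]mul1r ler_wpM2r ?WR_ge0.
Qed.

Lemma PN_ge0 d tau i j : 0 <= PN d tau i j.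
Proof.
elim: d i j => [|d IH] i j /=; first by rewrite mxE; case: (i == j).
rewrite mxE; apply: sumr_ge0 => k _; by rewrite mulr_ge0 ?Q_ge0.
Qed.

Lemma PN_rs d tau i : \sum_j PN d tau i j <= 1.
Proof.
elim: d i => [|d IH] i /=.
  rewrite (bigD1 i) //= big1 ?addr0; first by rewrite mxE eqxx.
  by move=> j /negbTE; rewrite mxE eq_sym => ->.
rewrite rowsum_mul; apply: Q_rowsum_le => // k.
by apply: sumr_ge0 => j _; exact: PN_ge0.
Qed.

Lemma PN_norm d tau : mxnorm (PN d tau) <= 1.
Proof.
apply: mxnorm_le => // i; rewrite (eq_bigr (fun j => PN d tau i j)) ?PN_rs //.
by move=> j _; rewrite ger0_norm ?PN_ge0.
Qed.

Lemma Lt_cong t1 t2 : (t1 %% p = t2 %% p)%N -> L t1 = L t2.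
Proof. by rewrite /Lt => ->. Qed.
Lemma Wt_cong t1 t2 : (t1 %% p = t2 %% p)%N -> W t1 = W t2.
Proof. by rewrite /Wt => ->. Qed.

Lemma PN_cong d t1 t2 : (t1 %% p = t2 %% p)%N -> PN d t1 = PN d t2.
Proof.
move=> h; elim: d => [|d IH] //=.
have h' : ((t1 + d) %% p = (t2 + d) %% p)%N by rewrite -modnDml h modnDml.
by rewrite IH (Lt_cong h') (Wt_cong h').
Qed.

Lemma PN_add a b tau : PN (a + b) tau = PN a (tau + b) *m PN b tau.
Proof.
elim: a => [|a IH] /=; first by rewrite add0n mul1mx.
by rewrite IH !mulmxA -addnA (addnC b a).
Qed.

End Sys.
Section Rho.
Variables (R : realType) (n p : nat) (What : 'M[R]_n)
  (f : 'I_n -> {set 'I_n} -> R) (Aseq : nat -> 'I_n -> 'I_n -> bool).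
Hypothesis p0 : (0 < p)%N.
Hypothesis What0 : forall i j, 0 <= What i j.
Hypothesis f01 : forall i S, 0 <= f i S <= 1.

Local Notation L := (Lt p What f Aseq).
Local Notation W := (Wt p What Aseq).
Local Notation PN := (PhiN p What f Aseq).

Definition rs d i := \sum_j PN d 0 i j.

Lemma rs_step d i : rs d.+1 i = \sum_k (L d *m W d) i k * rs d k.
Proof. by rewrite /rs /= add0n rowsum_mul. Qed.

Lemma rs_ge0 d k : 0 <= rs d k.
Proof. by apply: sumr_ge0 => j _; exact: PN_ge0. Qed.
Lemma rs_le1 d k : rs d k <= 1.
Proof. exact: PN_rs. Qed.

Lemma rs_stub t i : L t i i < 1 -> rs t.+1 i < 1.
Proof. move=> h; rewrite rs_step; apply: Q_rowsum_lt_stub => // k; [exact: rs_ge0|exact: rs_le1]. Qed.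

Lemma rs_edge t i j : 0 < W t i j -> rs t j < 1 -> rs t.+1 i < 1.
Proof. move=> h1 h2; rewrite rs_step; exact: (Q_rowsum_lt_edge What0 f01 (rs_ge0 t) (rs_le1 t) h1 h2). Qed.

Lemma spath_rs i k : s_path_to p What f Aseq i k -> rs k.+1 i < 1.
Proof.
case=> m [t0 [v [[m0 hk kp vm st] he]]].
suff H : forall r, (r <= m)%N -> rs (t0 + r).+1 (v r) < 1.
  by rewrite -vm -hk; apply: H.
elim=> [|r IH] hr; first by rewrite addn0; apply: rs_stub.
rewrite addnS; apply: (rs_edge (j := v r)); last by apply: IH; apply: ltnW.
by have := he r hr; rewrite /tedge addnS.
Qed.

Lemma norm_from_rs d : (forall i, rs d i < 1) -> mxnorm (PN d 0) < 1.
Proof.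
move=> h; apply: mxnorm_lt => // i.
rewrite (eq_bigr (fun j => PN d 0 i j)) ?h // => j _.
by rewrite ger0_norm ?PN_ge0.
Qed.

Lemma rho_lt1 : WDTG p What f Aseq -> mxnorm (Phi p What f Aseq p 0) < 1.
Proof.
case=> k [kp hk].
have H1 : mxnorm (PN k.+1 0) < 1.
  apply: norm_from_rs => i; case: (hk i) => [st|sp]; first exact: rs_stub.
  exact: spath_rs.
have -> : Phi p What f Aseq p 0 = PN (p - k.+1) k.+1 *m PN k.+1 0.
  by have := @PN_add R n p What f Aseq (p - k.+1) k.+1 0; rewrite add0n subnK // => <-; rewrite /Phi subn0.
apply: le_lt_trans (mxnorm_mul _ _) _.
apply: le_lt_trans H1; rewrite ler_piMl ?mxnorm_ge0 //.
exact: PN_norm.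
Qed.

End Rho.
Section Bound.
Variables (R : realType) (n p : nat) (What : 'M[R]_n)
  (f : 'I_n -> {set 'I_n} -> R) (Aseq : nat -> 'I_n -> 'I_n -> bool).
Hypothesis p0 : (0 < p)%N.
Hypothesis What0 : forall i j, 0 <= What i j.
Hypothesis f01 : forall i S, 0 <= f i S <= 1.

Local Notation PN := (PhiN p What f Aseq).
Let rho := mxnorm (PN p 0).

Lemma rho_ge0 : 0 <= rho. Proof. exact: mxnorm_ge0. Qed.
Lemma rho_le1 : rho <= 1. Proof. exact: PN_norm. Qed.

Lemma PN_qp q : mxnorm (PN (q * p) 0) <= rho ^+ q.
Proof.
elim: q => [|q IH]; first by rewrite mul0n expr0 /=; exact: mxnorm1.
rewrite mulSn (@PN_add R n p What f Aseq p (q * p) 0) add0n.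
rewrite (@PN_cong R n p What f Aseq p (q * p) 0); last by rewrite modnMl mod0n.
apply: le_trans (mxnorm_mul _ _) _; rewrite exprS.
by apply: ler_pM => //; [exact: mxnorm_ge0|exact: mxnorm_ge0].
Qed.

Lemma PN_0 d : mxnorm (PN d 0) <= rho ^+ (d %/ p).
Proof.
rewrite {1}(divn_eq d p) addnC (@PN_add R n p What f Aseq) add0n.
apply: le_trans (mxnorm_mul _ _) _.
rewrite -[X in _ <= X]mul1r; apply: ler_pM; try exact: mxnorm_ge0.
  exact: PN_norm.
exact: PN_qp.
Qed.

Lemma PN_bound d tau : mxnorm (PN d tau) <= rho ^+ (d %/ p).-1.
Proof.
set e := (p - tau %% p)%N.
have ep : (e <= p)%N by rewrite /e leq_subr.
have hte : ((tau + e) %% p = 0 %% p)%N.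
  rewrite mod0n {1}(divn_eq tau p) -addnA /e subnKC; last by apply: ltnW; rewrite ltn_pmod.
  by rewrite -mulSnr modnMl.
have [de|ed] := ltnP d e.
  have -> : (d %/ p = 0)%N by rewrite divn_small // (leq_trans de ep).
  exact: PN_norm.
rewrite -(subnK ed) (@PN_add R n p What f Aseq) (@PN_cong R n p What f Aseq _ _ _ hte).
apply: le_trans (mxnorm_mul _ _) _.
rewrite -[X in _ <= X]mulr1; apply: ler_pM; try exact: mxnorm_ge0.
  apply: le_trans (PN_0 _) _; apply: ler_wiXn2l; [exact: rho_ge0|exact: rho_le1|].
  rewrite subnK //.
  case hq: (d %/ p)%N => [|q] //=.
  rewrite -(mulnK q p0); apply: leq_div2r.
  have h1 := leq_trunc_div d p; rewrite hq mulSnr in h1.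
  lia.
exact: PN_norm.
Qed.

End Bound.
Section Misc.
Variable R : realType.

Lemma unit_of_ker m (M : 'M[R]_m) :
  (forall v : 'cV[R]_m, M *m v = v -> v = 0) -> 1%:M - M \in unitmx.
Proof.
move=> H; rewrite unitmxE unitfE -det_tr; apply/negP => /det0P [v vn0 hv].
have : (1%:M - M) *m v^T = 0.
  by have := congr1 trmx hv; rewrite trmx_mul trmxK trmx0.
rewrite mulmxBl mul1mx => /eqP; rewrite subr_eq0 => /eqP/esym/H hv0.
by move: vn0; rewrite -(trmxK v) hv0 trmx0 eqxx.
Qed.

Lemma ker_norm m (M : 'M[R]_m) : mxnorm M < 1 -> forall v : 'cV[R]_m, M *m v = v -> v = 0.
Proof.
move=> hM v hv; apply: mxnorm_eq0.
have h := mxnorm_mul M v; rewrite hv in h.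
have h0 := mxnorm_ge0 v.
have h1 := mxnorm_ge0 M.
apply/eqP; rewrite eq_le h0 andbT.
have : mxnorm v * (1 - mxnorm M) <= 0 by rewrite mulrBr mulr1 subr_le0 mulrC.
rewrite pmulr_lle0 // subr_gt0 //.
Qed.

Lemma ker_swap m (X Y : 'M[R]_m) :
  (forall u : 'cV[R]_m, X *m Y *m u = u -> u = 0) ->
  forall v : 'cV[R]_m, Y *m X *m v = v -> v = 0.
Proof.
move=> H v hv.
have hu : X *m Y *m (X *m v) = X *m v by rewrite -!mulmxA (mulmxA Y) hv.
by rewrite -hv -mulmxA (H _ hu) mulmx0.
Qed.

Lemma bernoulli (a : R) k : 0 <= a -> 1 + k%:R * a <= (1 + a) ^+ k.
Proof.
move=> a0; elim: k => [|k IH]; first by rewrite mul0r addr0 expr0.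
rewrite exprS.
apply: (@le_trans _ _ ((1 + a) * (1 + k%:R * a))); last first.
  by apply: ler_wpM2l => //; rewrite addr_ge0.
rewrite mulrDl mul1r mulrDr mulr1 -natr1 mulrDl mul1r.
by rewrite !addrA lerDl mulr_ge0 // mulr_ge0.
Qed.

Lemma geom_small (rho C eps : R) : 0 <= rho -> rho < 1 -> 0 <= C -> 0 < eps ->
  exists K : nat, rho ^+ K * C < eps.
Proof.
move=> r0 r1 C0 e0.
have [->|rpos] := eqVneq rho 0.
  by exists 1%N; rewrite expr1 mul0r.
have rp : 0 < rho by rewrite lt_def rpos r0.
set a := rho^-1 - 1.
have a0 : 0 < a by rewrite subr_gt0 invf_gt1.
have hx : 0 <= C / (eps * a) by rewrite divr_ge0 // ltW // mulr_gt0.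
exists (Num.Def.archi_bound (C / (eps * a))).
set K := Num.Def.archi_bound _.
have hK := archi_boundP hx; rewrite -/K in hK.
have hb := bernoulli K (ltW a0).
have ea : 0 < eps * a by rewrite mulr_gt0.
have h1 : C < eps * (K%:R * a).
  by rewrite ltr_pdivrMr // in hK; rewrite mulrCA.
have hr : (1 + a) = rho^-1 by rewrite /a addrC subrK.
rewrite hr exprVn in hb.
have rK : 0 < rho ^+ K by rewrite exprn_gt0.
rewrite mulrC -ltr_pdivlMr //.
apply: lt_le_trans h1 _.
rewrite ler_pM2l // mulrC.
apply: le_trans hb; rewrite mulrC lerDr ler01 //.
Qed.

Lemma pigeon (D : nat -> R) m : (forall l, 0 <= D l) ->
  (forall eps, 0 < eps -> exists2 l, (l < m)%N & D l < eps) ->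
  exists2 l, (l < m)%N & D l = 0.
Proof.
move=> D0; elim: m => [|m IH] H.
  by case: (H 1 ltr01) => l.
have [Dm|Dm] := eqVneq (D m) 0; first by exists m.
have Dp : 0 < D m by rewrite lt_def Dm D0.
case: IH => [eps e0|l lm Dl]; last by exists l => //; apply: ltnW.
case: (H (Num.min eps (D m))); first by rewrite lt_min e0.
move=> l; rewrite ltnS leq_eqVlt => /orP [/eqP ->|lm].
  by rewrite lt_min ltxx andbF.
by rewrite lt_min => /andP [h _]; exists l.
Qed.

End Misc.
Section Traj.
Variables (R : realType) (n p : nat) (What : 'M[R]_n)
  (f : 'I_n -> {set 'I_n} -> R) (Aseq : nat -> 'I_n -> 'I_n -> bool) (s x0 : 'cV[R]_n).
Hypothesis p0 : (0 < p)%N.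

Local Notation L := (Lt p What f Aseq).
Local Notation W := (Wt p What Aseq).
Local Notation PN := (PhiN p What f Aseq).
Local Notation x := (traj p What f Aseq s x0).

Definition G d tau := \sum_(j < d) (PN (d - 1 - j)%N (tau + j + 1)%N *m (1%:M - L (tau + j)%N)).

Lemma PN_S a tau t : t = (tau + a)%N -> PN a.+1 tau = L t *m W t *m PN a tau.
Proof. by move=> ->. Qed.

Lemma traj_add tau d : x (tau + d)%N = PN d tau *m x tau + G d tau *m s.
Proof.
elim: d => [|d IH].
  by rewrite addn0 /G big_ord0 mul0mx addr0 /= mul1mx.
rewrite addnS /= IH /G big_ord_recr /=.
have -> : \sum_(i < d) PN (d.+1 - 1 - i) (tau + i + 1) *m (1%:M - L (tau + i))
   = L (tau + d) *m W (tau + d) *m \sum_(i < d) PN (d - 1 - i) (tau + i + 1) *m (1%:M - L (tau + i)).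
  rewrite mulmx_sumr; apply: eq_bigr => i _.
  have -> : (d.+1 - 1 - i = (d - 1 - i).+1)%N by have := ltn_ord i; lia.
  rewrite (@PN_S (d - 1 - i) (tau + i + 1) (tau + d)) ?mulmxA //.
  by have := ltn_ord i; lia.
have -> : (d.+1 - 1 - d = 0)%N by lia.
by rewrite /= mul1mx mulmxDr !mulmxA [in RHS]mulmxDl ?mulmxA addrA.
Qed.

Lemma shift_mod a k c : (((a + k * p) + c) %% p = (a + c) %% p)%N.
Proof. by rewrite addnAC addnC modnMDl. Qed.

Lemma G_shift d l k : G d (l + k * p) = G d l.
Proof.
apply: eq_bigr => j _.
rewrite (@PN_cong R n p What f Aseq _ (l + k * p + j + 1) (l + j + 1)); last first.
  by rewrite -(addnA (l + k * p)) shift_mod addnA.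
by rewrite (@Lt_cong R n p What f Aseq (l + k * p + j) (l + j)) // shift_mod.
Qed.

Lemma PN_shift d l k : PN d (l + k * p) = PN d l.
Proof. by apply: PN_cong; rewrite addnC modnMDl. Qed.

Lemma traj_period l k :
  x (l + k.+1 * p)%N = Mcyc p What f Aseq l *m x (l + k * p)%N + Ncyc p What f Aseq l *m s.
Proof.
rewrite mulSnr addnA traj_add PN_shift G_shift //.
Qed.

Let M l := Mcyc p What f Aseq l.
Let N l := Ncyc p What f Aseq l.
Let xs l := invmx (1%:M - M l) *m N l *m s.

Lemma xs_fix l : 1%:M - M l \in unitmx -> xs l = M l *m xs l + N l *m s.
Proof.
move=> hu.
have h : (1%:M - M l) *m xs l = N l *m s by rewrite /xs !mulmxA mulmxV // mul1mx.
by move: h; rewrite mulmxBl mul1mx => /eqP; rewrite subr_eq => /eqP {1}->; rewrite addrC.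
Qed.

Lemma traj_err l k : 1%:M - M l \in unitmx ->
  x (l + k * p)%N - xs l = PN (k * p) l *m (x l - xs l).
Proof.
move=> hu; elim: k => [|k IH].
  by rewrite mul0n addn0 /= mul1mx.
rewrite traj_period {1}(xs_fix hu) -/(M l) -/(N l).
rewrite opprD addrACA subrr addr0 -mulmxBr IH mulmxA.
by rewrite mulSn (@PN_add R n p What f Aseq p (k * p) l) PN_shift.
Qed.

End Traj.
Lemma Mcyc_split (R : realType) (n p : nat) (What : 'M[R]_n)
  (f : 'I_n -> {set 'I_n} -> R) (Aseq : nat -> 'I_n -> 'I_n -> bool) l : (l < p)%N ->
  Mcyc p What f Aseq l = PhiN p What f Aseq l 0 *m PhiN p What f Aseq (p - l) l.
Proof.
move=> lp.
rewrite /Mcyc.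
have := @PN_add R n p What f Aseq l (p - l) l.
rewrite subnKC; last exact: ltnW.
move=> ->.
rewrite (@PN_cong R n p What f Aseq l p 0); last by rewrite modnn mod0n.
by [].
Qed.

Lemma PN_p_split (R : realType) (n p : nat) (What : 'M[R]_n)
  (f : 'I_n -> {set 'I_n} -> R) (Aseq : nat -> 'I_n -> 'I_n -> bool) l : (l < p)%N ->
  PhiN p What f Aseq p 0 = PhiN p What f Aseq (p - l) l *m PhiN p What f Aseq l 0.
Proof.
move=> lp.
have := @PN_add R n p What f Aseq (p - l) l 0.
rewrite subnK; last exact: ltnW.
rewrite add0n.
move=> h; exact: h.
Qed.

Unset Implicit Arguments.
Theorem theorem5 (R : realType) (n p : nat) (What : 'M[R]_n)
  (f : 'I_n -> {set 'I_n} -> R) (Aseq : nat -> 'I_n -> 'I_n -> bool)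
  (s : 'cV[R]_n) :
  (0 < p)%N ->
  (* hat W is row-stochastic *)
  (forall i j, 0 <= What i j) ->
  (forall i, \sum_(j < n) What i j = 1) ->
  (* f_i : 2^V -> [0,1], f_i(emptyset) = 0 *)
  (forall i S, 0 <= f i S <= 1) ->
  (forall i, f i (@finset.set0 _) = 0) ->
  (* innate opinions in [0,1]^n *)
  (forall i, 0 <= s i 0 <= 1) ->
  (* standing assumptions *)
  (forall l i, (l < p)%N ->
     (f i (nbrs (Aseq l) i) = 0 <-> forall j, Wmat What (Aseq l) i j = 0)) ->
  (forall l, (l < p)%N -> Lam f (Aseq l) != 0) ->
  (* G_0^p is a weakly defected temporal graph *)
  WDTG p What f Aseq ->
  let rho := mxnorm (Phi p What f Aseq p 0) in
  let c := (rho ^+ p)^-1 in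
  let gamma := powR rho (p%:R^-1) in
  [/\ rho < 1,
      (0 < rho -> forall t tau : nat, (tau <= t)%N ->
         mxnorm (Phi p What f Aseq t tau) <= c * gamma ^+ (t - tau)),
      (forall l, (l < p)%N -> 1%:M - Mcyc p What f Aseq l \in unitmx) &
      (forall (x0 y : 'cV[R]_n), omega_limit_pt (traj p What f Aseq s x0) y ->
         exists2 l, (l < p)%N &
           y = invmx (1%:M - Mcyc p What f Aseq l) *m Ncyc p What f Aseq l *m s)].
Proof.
move=> p0 What0 Wsum f01 fempty s01 stand Lnz wdtg rho c gamma.
have r1 : rho < 1 by apply: rho_lt1.
have rhoE : rho = mxnorm (PhiN p What f Aseq p 0) by rewrite /rho /Phi subn0.
have r0 : 0 <= rho by apply: mxnorm_ge0.
have Hb : forall d tau, mxnorm (PhiN p What f Aseq d tau) <= rho ^+ (d %/ p).-1.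
  by move=> d tau; rewrite rhoE; apply: PN_bound.
have Hu : forall l, (l < p)%N -> 1%:M - Mcyc p What f Aseq l \in unitmx.
  move=> l lp; apply: unit_of_ker.
  have e1 := Mcyc_split What f Aseq lp.
  have e0 := PN_p_split What f Aseq lp.
  rewrite e1; apply: ker_swap; rewrite -e0; apply: ker_norm; by rewrite -rhoE.
split; first exact: r1.
- move=> rpos t tau htt.
  rewrite /Phi; apply: le_trans (Hb _ _) _.
  set k := (t - tau)%N; set m := (k %/ p).-1.
  have rp1 : 0 < rho <= 1 by rewrite rpos ltW.
  have hp : (0 : R) < p%:R by rewrite ltr0n.
  have rpp : 0 < rho ^+ p by rewrite exprn_gt0.
  rewrite /c /gamma mulrC -[_ * _^-1]/(_ / _) ler_pdivlMr //.
  rewrite -exprD -(powR_mulrn _ r0) -(powR_mulrn _ (powR_ge0 _ _)) -powRrM.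
  apply: ger_powR => //.
  rewrite mulrC -[_ * _^-1]/(_ / _) ler_pdivrMr // -natrM ler_nat.
  have := divn_eq k p; have := ltn_pmod k p0; rewrite /m.
  set q := (k %/ p)%N; set r := (k %% p)%N. case: q => [|q] /=; nia.
- exact: Hu.
move=> x0 y hom.
set xs := fun l => invmx (1%:M - Mcyc p What f Aseq l) *m Ncyc p What f Aseq l *m s.
set x := traj p What f Aseq s x0.
set D := fun l => mxnorm (y - xs l).
set C := \sum_(l < p) mxnorm (x l - xs l).
have C0 : 0 <= C by apply: sumr_ge0 => l _; exact: mxnorm_ge0.
have Cl : forall l, (l < p)%N -> mxnorm (x l - xs l) <= C.
  move=> l lp; rewrite /C (bigD1 (Ordinal lp)) //= lerDl.
  by apply: sumr_ge0 => i _; exact: mxnorm_ge0.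
have errb : forall l k, (l < p)%N -> mxnorm (x (l + k * p)%N - xs l) <= rho ^+ k.-1 * C.
  move=> l k lp; rewrite /x /xs traj_err; try exact: p0; last exact: Hu.
  apply: le_trans (mxnorm_mul _ _) _.
  apply: ler_pM; [exact: mxnorm_ge0|exact: mxnorm_ge0| |exact: Cl].
  by have := Hb (k * p)%N l; rewrite mulnK.
have [l1 lp1 Dl1] : exists2 l, (l < p)%N & D l = 0.
  apply: pigeon => [l0|eps e0]; first exact: mxnorm_ge0.
  have e2 : 0 < eps / 2 by rewrite divr_gt0.
  have [K hK] := geom_small r0 r1 C0 e2.
  have [t [ht hxt]] := hom (eps / 2) e2 (K.+1 * p)%N.
  exists (t %% p)%N; first by rewrite ltn_pmod.
  have tE : t = (t %% p + (t %/ p) * p)%N by rewrite addnC -divn_eq.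
  have kK : (K.+1 <= t %/ p)%N.
    by rewrite -(mulnK K.+1 p0); apply: leq_div2r.
  have hb := errb (t %% p)%N (t %/ p)%N (ltn_pmod t p0).
  rewrite -tE in hb.
  have hb2 : mxnorm (x t - xs (t %% p)%N) < eps / 2.
    apply: le_lt_trans hb _; apply: le_lt_trans hK.
    apply: ler_wpM2r => //; apply: ler_wiXn2l => //; first exact: ltW.
    by case: (t %/ p)%N kK.
  rewrite /D (_ : y - _ = - (x t - y) + (x t - xs (t %% p)%N)); last first.
    by rewrite opprB addrA subrK.
  apply: le_lt_trans (mxnorm_add _ _) _.
  by rewrite mxnorm_opp [eps]splitr ltrD.
exists l1; first exact: lp1.
apply/eqP; rewrite -subr_eq0; apply/eqP.
exact: mxnorm_eq0.
Qed.
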